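(* Let $(H,L_H)$ be a right-resolving labeled graph presenting $Y=L_H(X_H)$. Let $\gamma$ be a finite path in $H$ whose start vertex $s_H(\gamma)$ is regular. Then the terminal vertex $t_H(\gamma)$ is regular.
   Context: A labeled graph $(H,L_H)$: finite directed graph (vertices $V_H$, edges $E_H$, source/terminal maps $s_H,t_H$) without sinks or sources, labeling $L_H:E_H\to A$, edge shift $X_H$; $L_H$ acts coordinatewise on paths. $X_H[0,\infty)$ denotes right-infinite paths and $X_H(-\infty,-1]$ left-infinite paths; $s_H$ of a (finite or right-infinite) path is the source of its first edge, $t_H$ of a (finite or left-infinite) path is the terminal vertex of its last edge; $Y[0,\infty)=\{y_{[0,\infty)}:y\in Y\}$. Right-resolving: distinct edges with the same source have distinct labels. $f_H(v)=\{L_H(x):x\in X_H[0,\infty), s_H(x)=v\}$; for $y\in Y$, $F(y)=\{w\in Y[0,\infty): y_{(-\infty,-1]}w\in Y\}$. A vertex $v$ is regular if there is $z\in X_H$ with $t_H(z_{(-\infty,-1]})=v$ and $f_H(v)=F(L_H(z))$. *)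

(* Defs.v *)
From mathcomp Require Import all_boot all_algebra.
Set Implicit Arguments. Unset Strict Implicit. Unset Printing Implicit Defensive.
Local Open Scope ring_scope.

Section LabeledGraph.
Variables (V E A : finType) (s t : E -> V) (L : E -> A).

Definition edge_shift (x : int -> E) : Prop := forall i : int, t (x i) = s (x (i + 1)).

Definition presented (y : int -> A) : Prop :=
  exists x, edge_shift x /\ y = (fun i => L (x i)).

Definition right_part {T : Type} (y : int -> T) : nat -> T := fun n => y (Posz n).

Definition concat_lr {T : Type} (y : int -> T) (w : nat -> T) : int -> T :=
  fun i => match i with Posz n => w n | Negz _ => y i end.

Definition follower_vertex (v : V) (w : nat -> A) : Prop :=
  exists x, edge_shift x /\ s (x 0) = v /\ w = (fun n => L (right_part x n)).

Definition follower_seq (y : int -> A) (w : nat -> A) : Prop :=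
  (exists y', presented y' /\ w = right_part y') /\ presented (concat_lr y w).

Definition regular (v : V) : Prop :=
  exists z, edge_shift z /\ t (z (-1)) = v /\
    (forall w, follower_vertex v w <-> follower_seq (fun i => L (z i)) w).

Definition right_resolving : Prop :=
  forall e1 e2 : E, s e1 = s e2 -> L e1 = L e2 -> e1 = e2.

Definition no_sinks_no_sources : Prop :=
  forall v : V, (exists e, s e = v) /\ (exists e, t e = v).

Definition fin_path (e : E) (p : seq E) : bool := path (fun a b => t a == s b) e p.

End LabeledGraph.

(* Main.v *)
Require Import Defs.
From mathcomp Require Import all_boot all_algebra.
From mathcomp Require Import zify.
From Stdlib Require Import FunctionalExtensionality.
Set Implicit Arguments. Unset Strict Implicit. Unset Printing Implicit Defensive.
Import GRing.Theory.
Local Open Scope ring_scope.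

Lemma posS1 (n : nat) : Posz n + 1 = Posz n.+1. Proof. lia. Qed.
Lemma neg01 : Negz 0 + 1 = Posz 0. Proof. lia. Qed.
Lemma negS1 (k : nat) : Negz k.+1 + 1 = Negz k. Proof. lia. Qed.
Lemma pos0m : Posz 0 + -1 = Negz 0. Proof. lia. Qed.
Lemma posSm (n : nat) : Posz n.+1 + -1 = Posz n. Proof. lia. Qed.
Lemma negm (k : nat) : Negz k + -1 = Negz k.+1. Proof. lia. Qed.

Definition ncons' {T : Type} (a : T) (w : nat -> T) : nat -> T :=
  fun n => match n with 0%N => a | m.+1 => w m end.

Fixpoint chain (V E : Type) (t : E -> V) (nxt : V -> E) (v : V) (n : nat) : E :=
  match n with 0%N => nxt v | m.+1 => nxt (t (chain t nxt v m)) end.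

Section Step.
Variables (V E A : finType) (s t : E -> V) (L : E -> A).

Lemma shift_es x k : edge_shift s t x -> edge_shift s t (fun i => x (i + k)).
Proof. by move=> H i; rewrite H addrAC. Qed.

Lemma shift_pres y k : presented s t L y -> presented s t L (fun i => y (i + k)).
Proof.
case=> x [hx ->]; exists (fun i => x (i + k)); split => //.
exact: shift_es.
Qed.

Lemma step (hgraph : no_sinks_no_sources s t) (hrr : right_resolving s L)
  (e : E) (hreg : regular s t L (s e)) : regular s t L (t e).
Proof.
case: hreg => z [hz [hz1 hzf]].
change (-1 : int) with (Negz 0) in hz1.
pose nxt v := odflt e [pick f | s f == v].
have hnxt v : s (nxt v) = v.
  rewrite /nxt; case: pickP => [f /eqP //|H].
  case: (hgraph v) => [[f hf] _]; move: (H f); by rewrite hf eqxx.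
pose c := chain t nxt (t e).
pose z' := fun i : int => match i with Posz n => c n | Negz 0 => e
                                       | Negz k.+1 => z (Negz k) end.
exists z'; split; [|split].
- move=> [n|[|k]].
  + rewrite posS1 /= /c /=; by rewrite hnxt.
  + rewrite neg01 /= /c /=; by rewrite hnxt.
  + case: k => [|k].
    * by rewrite negS1 /=.
    * rewrite negS1 /=; have := hz (Negz k.+1); by rewrite negS1.
- by [].
move=> w; split.
- case=> x [hx [hx0 hwx]].
  pose x2 := fun i : int => match i with Posz 0 => e | Posz n.+1 => x (Posz n)
                                         | Negz k => z (Negz k) end.
  have hx2 : edge_shift s t x2.
    move=> [[|n]|[|k]].
    + by rewrite posS1 /=.
    + rewrite posS1 /=; have := hx (Posz n); by rewrite posS1.
    + by rewrite neg01 /=.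
    + rewrite negS1 /=; have := hz (Negz k.+1); by rewrite negS1.
  have hfv : follower_vertex s t L (s e) (ncons' (L e) w).
    exists x2; split => //; split => //.
    apply: functional_extensionality => -[|n] //=.
    by rewrite hwx.
  case/hzf: hfv => _ hpres.
  split.
  + exists (fun i => L (x i)); split; last by rewrite hwx.
    by exists x.
  + have -> : concat_lr (fun i => L (z' i)) w =
              (fun i => concat_lr (fun i => L (z i)) (ncons' (L e) w) (i + 1)).
      apply: functional_extensionality => -[n|[|k]].
      * by rewrite posS1.
      * by rewrite neg01.
      * by rewrite negS1.
    exact: shift_pres.
- case=> _ hpres.
  have hp2 : presented s t L (concat_lr (fun i => L (z i)) (ncons' (L e) w)).
    have -> : concat_lr (fun i => L (z i)) (ncons' (L e) w) =
              (fun i => concat_lr (fun i => L (z' i)) w (i + -1)).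
      apply: functional_extensionality => -[[|n]|k].
      * by rewrite pos0m.
      * by rewrite posSm.
      * by rewrite negm.
    exact: shift_pres.
  have : follower_seq s t L (fun i => L (z i)) (ncons' (L e) w).
    split => //; by exists (concat_lr (fun i => L (z i)) (ncons' (L e) w)).
  case/hzf => x' [hx' [hx'0 heq]].
  have h0 : x' 0 = e.
    apply: hrr => //; have := congr1 (fun f => f 0%N) heq; by move=> /= ->.
  exists (fun i => x' (i + 1)); split; [exact: shift_es|split].
  + by rewrite add0r -(hx' 0) h0.
  + apply: functional_extensionality => n.
    have := congr1 (fun f => f n.+1) heq => /= ->.
    by rewrite /right_part posS1.
Qed.
End Step.

Theorem lemma2p2 (V E A : finType) (s t : E -> V) (L : E -> A)
  (hgraph : no_sinks_no_sources s t)
  (hrr : right_resolving s L)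
  (e : E) (p : seq E) (hpath : fin_path s t e p)
  (hreg : regular s t L (s e)) :
  regular s t L (t (last e p)).
Proof.
elim: p e hpath hreg => [|e' p IH] e hpath hreg /=.
  exact: step.
move: hpath; rewrite /fin_path /= => /andP [/eqP he hp].
apply: IH => //; rewrite -he; exact: step.
Qed.
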